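(* Let $\mathscr{G}_n$ be a simple, verbose $\upsilon$-reduction grammar, let $\varphi = \lambda(T[\Uparrow(S)])$, and let $t = (\lambda a)[s][s_1]\cdots[s_w]$ be a $\lambda\upsilon$-term ($w\ge 0$). Then $t$ normalises in exactly $n+1$ normal-order $\upsilon$-steps if and only if there exists a unique term $\pi = (\lambda(\alpha[\Uparrow(\sigma)]))[\sigma_1]\cdots[\sigma_w] \in \Delta_\varphi^n$ such that $t \in L\big((\lambda\alpha)[\sigma][\sigma_1]\cdots[\sigma_w]\big)$.
   Context: $\lambda\upsilon$-terms: $t ::= \underline{n} \mid \lambda t \mid t\,t \mid t[s]$; substitutions $s ::= t/ \mid \Uparrow(s) \mid\ \uparrow$; indices $\underline{n} ::= \underline{0} \mid \mathtt{S}\,\underline{n}$. The $\upsilon$-rules: $(a b)[s] \to a[s](b[s])$; $(\lambda a)[s] \to \lambda(a[\Uparrow(s)])$; $\underline{0}[a/] \to a$; $(\mathtt{S}\,\underline{n})[a/] \to \underline{n}$; $\underline{0}[\Uparrow(s)] \to \underline{0}$; $(\mathtt{S}\,\underline{n})[\Uparrow(s)] \to \underline{n}[s][\uparrow]$; $\underline{n}[\uparrow] \to \mathtt{S}\,\underline{n}$. A term normalises in $k$ steps if leftmost-outermost $\upsilon$-reduction reaches a $\upsilon$-normal form in exactly $k$ steps. $\mathscr{F}$ is the ranked alphabet of $\lambda\upsilon$ symbols (application, closure $\cdot[\cdot]$ binary; $\lambda$, $\cdot/$, $\Uparrow$, $\mathtt{S}$ unary; $\uparrow,\underline{0}$ constants);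 $\mathscr{T}_{\mathscr{F}}(X)$ is the set of terms over $\mathscr{F}$ with variables from $X$. In a regular tree grammar with productions $X\to\alpha$, $L(\alpha)$ is the set of ground terms derivable from $\alpha$; a non-terminal is unambiguous if each ground term has at most one derivation from it; a production $X\to\alpha$ is self-referencing if $X$ occurs in $\alpha$, regular otherwise. $\Lambda$ has productions $T \to N \mid \lambda T \mid T T \mid T[S]$, $S \to T/ \mid \Uparrow(S) \mid \uparrow$, $N \to \underline{0} \mid \mathtt{S} N$. A $\upsilon$-reduction grammar $\mathscr{G}_n$ has axiom $G_n$, non-terminals $\mathscr{N}_n=\{T,S,N,G_0,\dots,G_n\}$, contains all productions of $\Lambda$, and each $G_k$ ($0\le k\le n$) is unambiguous with $L(G_k)$ the set of terms normalising in exactly $k$ steps. It is simple if its self-referencing productions are productions of $\Lambda$ or of the form $G_k \to \lambda G_k \mid G_0 G_k \mid G_k G_0$, and each regular production $G_k\to\alpha$ has $\alpha \in \mathscr{T}_{\mathscr{F}}(\{T,S,N,G_0,\dots,G_{k-1}\})$. It is verbose if none of its productions has the form $X \to G_k[\sigma_1]\cdots[\sigma_w]$. A term has closure width $w$ if $w$ is the largest integer with the term of the form $\chi[\sigma_1]\cdots[\sigma_w]$. A finite intersection partition $\Pi(\alpha,\beta)$ of $\alpha,\beta\in\mathscr{T}_{\mathscr{F}}(\mathscr{N}_n)$ is a finite set of terms in $\mathscr{T}_{\mathscr{F}}(\mathscr{N}_n)$ with pairwise disjoint languages whose union of languages is $L(\alpha)\cap L(\beta)$. For a template $\varphi = \chi[\tau_1]\cdots[\tau_d]$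 of closure width $d$ and a production $X \to \gamma$ of $\mathscr{G}_n$ where $\gamma = \gamma'[\sigma_1]\cdots[\sigma_w]$ has closure width $w$, set $\Delta_\varphi(\gamma) = \Pi\big(\gamma,\ \chi[\tau_1]\cdots[\tau_d][S]\cdots[S]\big)$ with $w-d$ copies of $[S]$ appended, and $\Delta_\varphi^n = \bigcup\{\Delta_\varphi(\gamma) : G_n \to \gamma \text{ a production of } \mathscr{G}_n\}$. (Here $\varphi = \lambda(T[\Uparrow(S)])$ has closure width $d=0$.) *)

(* Defs.v *)
From Stdlib Require Import List Arith.
Import ListNotations.

(** Terms over the (single-sorted) ranked alphabet F with variables in X:
    T_F(X).  Ground terms are T_F(Empty_set). *)
Inductive tree (X : Type) : Type :=
| Var   : X -> tree X
| App   : tree X -> tree X -> tree X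
| Clos  : tree X -> tree X -> tree X          (* a[s] *)
| Lam   : tree X -> tree X
| Slash : tree X -> tree X                    (* a/ *)
| Lift  : tree X -> tree X                    (* Uparrow(s) *)
| Succ  : tree X -> tree X
| Shift : tree X                              (* uparrow *)
| Zero  : tree X.
Arguments Var {X}. Arguments App {X}. Arguments Clos {X}. Arguments Lam {X}.
Arguments Slash {X}. Arguments Lift {X}. Arguments Succ {X}.
Arguments Shift {X}. Arguments Zero {X}.

Definition gterm := tree Empty_set.

Inductive sort := STerm | SSubst | SIndex.

Fixpoint wsorted (k : sort) (t : gterm) : bool :=
  match k, t with
  | SIndex, Zero => true
  | SIndex, Succ m => wsorted SIndex m
  | STerm, Zero => true
  | STerm, Succ m => wsorted SIndex m
  | STerm, Lam a => wsorted STerm a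
  | STerm, App a b => wsorted STerm a && wsorted STerm b
  | STerm, Clos a s => wsorted STerm a && wsorted SSubst s
  | SSubst, Slash a => wsorted STerm a
  | SSubst, Lift s => wsorted SSubst s
  | SSubst, Shift => true
  | _, _ => false
  end.

Definition lterm (t : gterm) : Prop := wsorted STerm t = true.
Definition is_index (t : gterm) : bool := wsorted SIndex t.

Definition root_step (t : gterm) : option gterm :=
  match t with
  | Clos (App a b) s => Some (App (Clos a s) (Clos b s))
  | Clos (Lam a) s => Some (Lam (Clos a (Lift s)))
  | Clos Zero (Slash a) => Some a
  | Clos (Succ m) (Slash _) => Some m
  | Clos Zero (Lift _) => Some Zero
  | Clos (Succ m) (Lift s) => Some (Clos (Clos m s) Shift)
  | Clos m Shift => if is_index m then Some (Succ m) else None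
  | _ => None
  end.

(** One leftmost-outermost (normal-order) upsilon-step; [None] iff the term
    is in upsilon-normal form. *)
Fixpoint lo_step (t : gterm) : option gterm :=
  match root_step t with
  | Some u => Some u
  | None =>
    match t with
    | App a b => match lo_step a with
                 | Some a' => Some (App a' b)
                 | None => option_map (App a) (lo_step b) end
    | Clos a b => match lo_step a with
                  | Some a' => Some (Clos a' b)
                  | None => option_map (Clos a) (lo_step b) end
    | Lam a => option_map Lam (lo_step a)
    | Slash a => option_map Slash (lo_step a)
    | Lift a => option_map Lift (lo_step a)
    | Succ a => option_map Succ (lo_step a)
    | _ => None
    end
  end.

Fixpoint lo_iter (k : nat) (t : gterm) : option gterm :=
  match k with
  | 0 => Some t
  | S k' => match lo_step t with Some u => lo_iter k' u | None => None end
  end.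

Definition normalises_in (k : nat) (t : gterm) : Prop :=
  match lo_iter k t with
  | Some u => lo_step u = None
  | None => False
  end.

Inductive nt := NT | NS | NN | NG (k : nat).

Definition production := (nt * tree nt)%type.
Definition grammar := list production.

Fixpoint all_nts (p : nt -> Prop) (a : tree nt) : Prop :=
  match a with
  | Var X => p X
  | App a b | Clos a b => all_nts p a /\ all_nts p b
  | Lam a | Slash a | Lift a | Succ a => all_nts p a
  | Shift | Zero => True
  end.

Definition occurs (X : nt) (a : tree nt) : Prop := ~ all_nts (fun Y => Y <> X) a.

(** Derivation trees: at each expansion of a non-terminal, the production used
    is recorded. *)
Inductive dtree :=
| DExp : tree nt -> dtree -> dtree
| DApp : dtree -> dtree -> dtree
| DClos : dtree -> dtree -> dtree
| DLam : dtree -> dtree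
| DSlash : dtree -> dtree
| DLift : dtree -> dtree
| DSucc : dtree -> dtree
| DShift : dtree
| DZero : dtree.

Inductive valid (P : grammar) : tree nt -> gterm -> dtree -> Prop :=
| v_var X a g d : In (X, a) P -> valid P a g d -> valid P (Var X) g (DExp a d)
| v_app a b g h d e : valid P a g d -> valid P b h e ->
    valid P (App a b) (App g h) (DApp d e)
| v_clos a b g h d e : valid P a g d -> valid P b h e ->
    valid P (Clos a b) (Clos g h) (DClos d e)
| v_lam a g d : valid P a g d -> valid P (Lam a) (Lam g) (DLam d)
| v_slash a g d : valid P a g d -> valid P (Slash a) (Slash g) (DSlash d)
| v_lift a g d : valid P a g d -> valid P (Lift a) (Lift g) (DLift d)
| v_succ a g d : valid P a g d -> valid P (Succ a) (Succ g) (DSucc d)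
| v_shift : valid P Shift Shift DShift
| v_zero : valid P Zero Zero DZero.

Definition Lang (P : grammar) (a : tree nt) (g : gterm) : Prop :=
  exists d, valid P a g d.

Definition unambiguous (P : grammar) (X : nt) : Prop :=
  forall g d1 d2, valid P (Var X) g d1 -> valid P (Var X) g d2 -> d1 = d2.

Definition Lambda_prods : grammar :=
  [ (NT, Var NN); (NT, Lam (Var NT)); (NT, App (Var NT) (Var NT));
    (NT, Clos (Var NT) (Var NS));
    (NS, Slash (Var NT)); (NS, Lift (Var NS)); (NS, Shift);
    (NN, Zero); (NN, Succ (Var NN)) ].

Definition in_Nn (n : nat) (X : nt) : Prop :=
  match X with NG k => k <= n | _ => True end.

Definition reduction_grammar (n : nat) (P : grammar) : Prop :=
  (forall X a, In (X, a) P -> in_Nn n X /\ all_nts (in_Nn n) a) /\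
  (forall p, In p Lambda_prods -> In p P) /\
  (forall k, k <= n ->
     unambiguous P (NG k) /\
     forall g, Lang P (Var (NG k)) g <-> (lterm g /\ normalises_in k g)).

Definition simple (n : nat) (P : grammar) : Prop :=
  (forall X a, In (X, a) P -> occurs X a ->
     In (X, a) Lambda_prods \/
     exists k, X = NG k /\
       (a = Lam (Var (NG k)) \/ a = App (Var (NG 0)) (Var (NG k)) \/
        a = App (Var (NG k)) (Var (NG 0)))) /\
  (forall k a, In (NG k, a) P -> ~ occurs (NG k) a ->
     all_nts (fun Y => Y = NT \/ Y = NS \/ Y = NN \/
                       exists j, j < k /\ Y = NG j) a).

Fixpoint clos_head {X} (a : tree X) : tree X :=
  match a with Clos b _ => clos_head b | _ => a end.

Fixpoint clos_width {X} (a : tree X) : nat :=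
  match a with Clos b _ => S (clos_width b) | _ => 0 end.

Definition verbose (P : grammar) : Prop :=
  forall X a, In (X, a) P -> ~ exists k, clos_head a = Var (NG k).

Definition clos_chain {X} (b : tree X) (ss : list (tree X)) : tree X :=
  fold_left (fun acc s => Clos acc s) ss b.

Definition is_intersection_partition (n : nat) (P : grammar)
    (Pi : list (tree nt)) (a b : tree nt) : Prop :=
  (forall p, In p Pi -> all_nts (in_Nn n) p) /\
  (forall p1 p2, In p1 Pi -> In p2 Pi -> p1 <> p2 ->
     forall g, ~ (Lang P p1 g /\ Lang P p2 g)) /\
  (forall g, (exists p, In p Pi /\ Lang P p g) <-> (Lang P a g /\ Lang P b g)).

Definition phi : tree nt := Lam (Clos (Var NT) (Lift (Var NS))).

Definition template_target (tpl gamma : tree nt) : tree nt :=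
  clos_chain tpl (repeat (Var NS) (clos_width gamma - clos_width tpl)).

(** Delta^n_phi, given the chosen partitions Pi gamma = Delta_phi(gamma). *)
Definition Delta (n : nat) (P : grammar) (Pi : tree nt -> list (tree nt))
    (p : tree nt) : Prop :=
  exists gamma, In (NG n, gamma) P /\ In p (Pi gamma).

(* Main.v *)
Require Import Defs.
From Stdlib Require Import List Arith Lia Classical.
Import ListNotations.

Fixpoint rchain {X} (u : tree X) (r : list (tree X)) : tree X :=
  match r with [] => u | g :: r' => Clos (rchain u r') g end.

Lemma rchain_app {X} (u : tree X) r g : rchain u (r ++ [g]) = rchain (Clos u g) r.
Proof. induction r; simpl; congruence. Qed.

Lemma fold_rchain {X} (l : list (tree X)) : forall u,
  fold_left (fun acc s => Clos acc s) l u = rchain u (rev l).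
Proof. induction l as [|g l IH]; intro u; simpl. reflexivity.
  rewrite rchain_app, IH. reflexivity. Qed.

Lemma clos_chain_rchain {X} (u : tree X) l : clos_chain u l = rchain u (rev l).
Proof. apply fold_rchain. Qed.

Lemma repeat_S {A} (x : A) k : repeat x (S k) = repeat x k ++ [x].
Proof. induction k; simpl; [reflexivity|]. simpl in IHk. rewrite IHk. reflexivity. Qed.

Lemma clos_head_rchain {X} (u : tree X) r : clos_head (rchain u r) = clos_head u.
Proof. induction r; simpl; auto. Qed.

Definition notClos {X} (u : tree X) := forall x y, u <> Clos x y.

Lemma rchain_inj_len {X} (u u' : tree X) r : forall r',
  length r = length r' -> rchain u r = rchain u' r' -> u = u' /\ r = r'.
Proof. induction r; destruct r'; simpl; intros H1 H2; try discriminate. auto.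
  injection H2 as H2 H3. injection H1 as H1. destruct (IHr _ H1 H2). subst. auto. Qed.

Lemma rchain_inj {X} (u u' : tree X) : notClos u -> notClos u' -> forall r r',
  rchain u r = rchain u' r' -> u = u' /\ r = r'.
Proof. intros Hu Hu'. induction r; destruct r'; simpl; intros H.
- auto.
- exfalso. eapply Hu; eauto.
- exfalso. eapply Hu'; eauto.
- injection H as H1 H2. destruct (IHr _ H1). subst. auto. Qed.

Lemma rchain_prefix {X} (L u : tree X) : notClos L -> forall gr r,
  rchain L r = rchain u gr -> exists r1, r = gr ++ r1 /\ u = rchain L r1.
Proof. intros HL. induction gr; simpl; intros r H.
- exists r; auto.
- destruct r; simpl in H. exfalso; eapply HL; eauto.
  injection H as H1 H2; subst. destruct (IHgr _ H1) as (r1 & -> & ->). exists r1; auto. Qed.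

Lemma lterm_rchain u r : lterm (rchain u r) <-> lterm u /\ Forall (fun g => wsorted SSubst g = true) r.
Proof. unfold lterm. induction r; simpl.
- split; [auto|tauto].
- rewrite Bool.andb_true_iff, IHr. split.
  + intros [[H1 H2] H3]. auto.
  + intros [H1 H2]. inversion H2; subst. auto. Qed.

Lemma Lang_var P X a g : In (X, a) P -> Lang P a g -> Lang P (Var X) g.
Proof. intros H [d Hd]. exists (DExp a d). constructor; auto. Qed.
Lemma L_clos P x y g h : Lang P x g -> Lang P y h -> Lang P (Clos x y) (Clos g h).
Proof. intros [d1 H1] [d2 H2]. eexists. constructor; eauto. Qed.
Lemma L_app P x y g h : Lang P x g -> Lang P y h -> Lang P (App x y) (App g h).
Proof. intros [d1 H1] [d2 H2]. eexists. constructor; eauto. Qed.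
Lemma L_lam P x g : Lang P x g -> Lang P (Lam x) (Lam g).
Proof. intros [d1 H1]. eexists. constructor; eauto. Qed.
Lemma L_slash P x g : Lang P x g -> Lang P (Slash x) (Slash g).
Proof. intros [d1 H1]. eexists. constructor; eauto. Qed.
Lemma L_lift P x g : Lang P x g -> Lang P (Lift x) (Lift g).
Proof. intros [d1 H1]. eexists. constructor; eauto. Qed.
Lemma L_succ P x g : Lang P x g -> Lang P (Succ x) (Succ g).
Proof. intros [d1 H1]. eexists. constructor; eauto. Qed.
Lemma L_shift P : Lang P Shift Shift.
Proof. eexists. constructor. Qed.
Lemma L_zero P : Lang P Zero Zero.
Proof. eexists. constructor. Qed.

Lemma Lang_Clos P x y g : Lang P (Clos x y) g ->
  exists g1 g2, g = Clos g1 g2 /\ Lang P x g1 /\ Lang P y g2.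
Proof. intros [d H]. inversion H; subst. do 2 eexists; split; [reflexivity|split; eexists; eassumption]. Qed.
Lemma Lang_Lam P x g : Lang P (Lam x) g -> exists g1, g = Lam g1 /\ Lang P x g1.
Proof. intros [d H]. inversion H; subst. eexists; split; [reflexivity|eexists; eassumption]. Qed.
Lemma Lang_Lift P x g : Lang P (Lift x) g -> exists g1, g = Lift g1 /\ Lang P x g1.
Proof. intros [d H]. inversion H; subst. eexists; split; [reflexivity|eexists; eassumption]. Qed.

Lemma decompose P h : forall sr g, Lang P (rchain h sr) g ->
  exists u gr, g = rchain u gr /\ Lang P h u /\ Forall2 (Lang P) sr gr.
Proof. induction sr as [|s sr IH]; simpl; intros g H.
- exists g, []. auto.
- apply Lang_Clos in H as (g1 & g2 & -> & H1 & H2).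
  destruct (IH _ H1) as (u & gr & -> & Hu & Hf).
  exists u, (g2 :: gr). simpl; auto. Qed.

Lemma compose P h u : Lang P h u -> forall sr gr, Forall2 (Lang P) sr gr ->
  Lang P (rchain h sr) (rchain u gr).
Proof. intros Hu sr gr HF; induction HF; simpl; auto. apply L_clos; auto. Qed.

Lemma lo_step_Clos A g : lo_step (Clos A g) =
  match root_step (Clos A g) with Some u => Some u | None =>
    match lo_step A with Some a' => Some (Clos a' g) | None => option_map (Clos A) (lo_step g) end end.
Proof. reflexivity. Qed.
Lemma lo_step_Lam x : lo_step (Lam x) = option_map Lam (lo_step x).
Proof. reflexivity. Qed.
Lemma lo_step_Succ x : lo_step (Succ x) = option_map Succ (lo_step x).
Proof. reflexivity. Qed.

Lemma root_clos_clos (x y g : gterm) : root_step (Clos (Clos x y) g) = None.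
Proof. destruct g; reflexivity. Qed.

Lemma lo_ctx (u u' : gterm) : (exists x y, u = Clos x y) -> lo_step u = Some u' ->
  forall r, lo_step (rchain u r) = Some (rchain u' r).
Proof. intros [x [y ->]] H r. induction r; cbn [rchain]. auto.
  rewrite lo_step_Clos.
  assert (E : exists p q, rchain (Clos x y) r = Clos p q) by (destruct r; simpl; eauto).
  destruct E as (p & q & E). rewrite E, root_clos_clos, <- E, IHr. reflexivity. Qed.

Lemma lo_iter_add a b t : lo_iter (a + b) t =
  match lo_iter a t with Some u => lo_iter b u | None => None end.
Proof. revert t; induction a; intros t; simpl. reflexivity. destruct (lo_step t); auto. Qed.

Lemma lo_iter_Lam k : forall x, lo_iter k (Lam x) = option_map Lam (lo_iter k x).
Proof. induction k; intros x; [reflexivity|]. cbn [lo_iter]. rewrite lo_step_Lam.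
  destruct (lo_step x); simpl; auto. Qed.

Lemma norm_det k : forall k' t, normalises_in k t -> normalises_in k' t -> k = k'.
Proof. unfold normalises_in. induction k; destruct k'; intros t H1 H2; cbn [lo_iter] in *.
- auto.
- rewrite H1 in H2. contradiction.
- rewrite H2 in H1. contradiction.
- destruct (lo_step t) eqn:E; [|contradiction]. f_equal. eapply IHk; eauto. Qed.

Lemma norm_step k t t' : lo_step t = Some t' -> (normalises_in (S k) t <-> normalises_in k t').
Proof. intros H. unfold normalises_in; cbn [lo_iter]. rewrite H. tauto. Qed.

Fixpoint succs {X} (j : nat) (x : tree X) : tree X :=
  match j with 0 => x | S j => Succ (succs j x) end.

Lemma lo_step_succs j : lo_step (succs j Zero) = None.
Proof. induction j; cbn [succs]; [reflexivity|]. rewrite lo_step_Succ, IHj. reflexivity. Qed.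

Lemma wsorted_succs j (y : gterm) : wsorted SIndex (succs j y) = wsorted SIndex y.
Proof. induction j; simpl; auto. Qed.

Lemma step_succs_shift i : lo_step (Clos (succs i Zero) Shift) = Some (Succ (succs i Zero)).
Proof. destruct i; [reflexivity|]. simpl. unfold is_index. simpl. rewrite wsorted_succs. reflexivity. Qed.

Lemma Z_norm k : forall i, normalises_in k (rchain (succs i Zero) (repeat Shift k)).
Proof. induction k; intro i.
- unfold normalises_in; simpl. apply lo_step_succs.
- rewrite repeat_S, rchain_app.
  apply (norm_step _ _ (rchain (succs (S i) Zero) (repeat Shift k))).
  + apply lo_ctx; eauto. apply step_succs_shift.
  + apply IHk. Qed.

Lemma lam_chain r : forall b, lo_iter (length r) (rchain (Lam b) r) = Some (Lam (rchain b (map Lift r))).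
Proof. induction r as [|x r IH] using rev_ind; intro b. reflexivity.
  replace (length (r ++ [x])) with (S (length r)) by (rewrite length_app; simpl; lia).
  rewrite rchain_app. cbn [lo_iter].
  rewrite (lo_ctx _ (Lam (Clos b (Lift x)))); eauto.
  rewrite IH, map_app. simpl. rewrite rchain_app. reflexivity. Qed.

Lemma zero_lift r : lo_iter (length r) (rchain Zero (map Lift r)) = Some Zero.
Proof. induction r as [|x r IH] using rev_ind. reflexivity.
  replace (length (r ++ [x])) with (S (length r)) by (rewrite length_app; simpl; lia).
  rewrite map_app. simpl map. rewrite rchain_app. cbn [lo_iter].
  rewrite (lo_ctx _ Zero); eauto. Qed.

Lemma norm_2m gr : normalises_in (length gr + length gr) (rchain (Lam Zero) gr).
Proof. unfold normalises_in. rewrite lo_iter_add, lam_chain, lo_iter_Lam, zero_lift. reflexivity. Qed.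

Lemma norm_3m gr : normalises_in (length gr + length gr + length gr) (rchain (Lam (Lam Zero)) gr).
Proof. unfold normalises_in. rewrite !lo_iter_add, lam_chain, lo_iter_Lam.
  pose proof (lam_chain (map Lift gr) Zero) as H. rewrite length_map in H. rewrite H. simpl.
  rewrite lo_iter_Lam, lo_iter_Lam.
  pose proof (zero_lift (map Lift gr)) as H2. rewrite length_map in H2. rewrite H2. reflexivity. Qed.

Lemma lamchain_nonnil b r : r <> [] -> lo_step (rchain (Lam b) r) <> None.
Proof. intros Hr. destruct (exists_last Hr) as (r' & x & ->).
  rewrite rchain_app, (lo_ctx _ (Lam (Clos b (Lift x)))); eauto; discriminate. Qed.

Ltac inL HL := apply HL; simpl; repeat (first [left; reflexivity | right]).

Lemma lambda_complete P (HL : forall p, In p Lambda_prods -> In p P) : forall g,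
  (wsorted STerm g = true -> Lang P (Var NT) g) /\
  (wsorted SSubst g = true -> Lang P (Var NS) g) /\
  (wsorted SIndex g = true -> Lang P (Var NN) g).
Proof. induction g as [e| g1 IH1 g2 IH2 | g1 IH1 g2 IH2 | g IH | g IH | g IH | g IH | |];
  simpl; repeat split; intros H; try discriminate.
- apply Bool.andb_true_iff in H as [H1 H2].
  apply Lang_var with (App (Var NT) (Var NT)); [inL HL|]. apply L_app; firstorder.
- apply Bool.andb_true_iff in H as [H1 H2].
  apply Lang_var with (Clos (Var NT) (Var NS)); [inL HL|]. apply L_clos; firstorder.
- apply Lang_var with (Lam (Var NT)); [inL HL|]. apply L_lam; firstorder.
- apply Lang_var with (Slash (Var NT)); [inL HL|]. apply L_slash; firstorder.
- apply Lang_var with (Lift (Var NS)); [inL HL|]. apply L_lift; firstorder.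
- apply Lang_var with (Var NN); [inL HL|].
  apply Lang_var with (Succ (Var NN)); [inL HL|]. apply L_succ; firstorder.
- apply Lang_var with (Succ (Var NN)); [inL HL|]. apply L_succ; firstorder.
- apply Lang_var with Shift; [inL HL|]. apply L_shift.
- apply Lang_var with (Var NN); [inL HL|].
  apply Lang_var with Zero; [inL HL|]. apply L_zero.
- apply Lang_var with Zero; [inL HL|]. apply L_zero.
Qed.

Definition junk (y : gterm) := (clos_head y = Zero \/ clos_head y = Shift) /\
  (forall y1 y2, y = Clos y1 y2 -> y2 = Shift) /\ (forall z, y <> Lift z).

Lemma junk_exists n P (HG : reduction_grammar n P) X : in_Nn n X ->
  exists y, Lang P (Var X) y /\ junk y.
Proof. destruct HG as [_ [HL HGk]].
  pose proof (lambda_complete P HL) as LC.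
  destruct X; intros Hin.
- exists Zero. split. apply LC; reflexivity. split; [simpl; auto| split; discriminate].
- exists Shift. split. apply LC; reflexivity. split; [simpl; auto| split; discriminate].
- exists Zero. split. apply LC; reflexivity. split; [simpl; auto| split; discriminate].
- exists (rchain Zero (repeat Shift k)). split.
  + apply (proj2 (HGk k Hin)). split.
    * apply lterm_rchain. split; [reflexivity|].
      apply Forall_forall. intros x Hx. apply repeat_spec in Hx. subst; reflexivity.
    * apply (Z_norm k 0).
  + split; [rewrite clos_head_rchain; auto|split].
    * destruct k; simpl; intros y1 y2 H; [discriminate|]. injection H; auto.
    * destruct k; simpl; discriminate.
Qed.

Lemma template_head P r y : Lang P (rchain phi r) y -> exists z, clos_head y = Lam z.
Proof. intros H. apply decompose in H as (u & gr & -> & Hu & _).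
  apply Lang_Lam in Hu as (g1 & -> & _). rewrite clos_head_rchain. simpl. eexists; reflexivity. Qed.

Lemma junk_not_template P r y : junk y -> Lang P (rchain phi r) y -> False.
Proof. intros [Hj _] H. apply template_head in H as (z & Hz). rewrite Hz in Hj.
  destruct Hj; discriminate. Qed.

Lemma inv_Lam P p g : Lang P p (Lam g) -> (exists X, p = Var X) \/ (exists p1, p = Lam p1 /\ Lang P p1 g).
Proof. intros [d H]. inversion H; subst; [left; eauto| right; eexists; split; [reflexivity|eexists; eauto]]. Qed.
Lemma inv_Clos P p g h : Lang P p (Clos g h) -> (exists X, p = Var X) \/
  (exists p1 p2, p = Clos p1 p2 /\ Lang P p1 g /\ Lang P p2 h).
Proof. intros [d H]. inversion H; subst; [left; eauto| right; do 2 eexists; split; [reflexivity|split; eexists; eauto]]. Qed.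
Lemma inv_Lift P p g : Lang P p (Lift g) -> (exists X, p = Var X) \/ (exists p1, p = Lift p1 /\ Lang P p1 g).
Proof. intros [d H]. inversion H; subst; [left; eauto| right; eexists; split; [reflexivity|eexists; eauto]]. Qed.

Lemma shape n P (HG : reduction_grammar n P) a s : forall R p, all_nts (in_Nn n) p ->
  Lang P p (rchain (Lam (Clos a (Lift s))) R) ->
  (forall g, Lang P p g -> Lang P (rchain phi (repeat (Var NS) (length R))) g) ->
  exists al sg pr, length pr = length R /\ p = rchain (Lam (Clos al (Lift sg))) pr.
Proof. induction R as [|g R IH]; intros p Hn Hp Hsub; cbn [rchain length repeat] in *.
- apply inv_Lam in Hp as [(X & ->) | (q & -> & Hq)].
  + destruct (junk_exists n P HG X Hn) as (y & Hy & Hj).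
    exfalso. apply (junk_not_template P [] y Hj). apply Hsub; auto.
  + apply inv_Clos in Hq as [(X & ->) | (al & q' & -> & Hal & Hq')].
    * destruct (junk_exists n P HG X Hn) as (y & Hy & Hj).
      specialize (Hsub (Lam y) (L_lam _ _ _ Hy)).
      apply Lang_Lam in Hsub as (g1 & E & Hg1). injection E as <-.
      apply Lang_Clos in Hg1 as (y1 & y2 & -> & _ & H2).
      apply Lang_Lift in H2 as (z & -> & _).
      destruct Hj as (_ & Hj & _). specialize (Hj _ _ eq_refl). discriminate.
    * apply inv_Lift in Hq' as [(X & ->) | (sg & -> & _)].
      -- destruct Hn as [_ Hn].
         destruct (junk_exists n P HG X Hn) as (y & Hy & Hj).
         specialize (Hsub (Lam (Clos a y)) (L_lam _ _ _ (L_clos _ _ _ _ _ Hal Hy))).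
         apply Lang_Lam in Hsub as (g1 & E & Hg1). injection E as <-.
         apply Lang_Clos in Hg1 as (y1 & y2 & E & _ & H2). injection E as <- <-.
         apply Lang_Lift in H2 as (z & -> & _).
         destruct Hj as (_ & _ & Hj). exfalso; eapply Hj; eauto.
      -- exists al, sg, []. auto.
- apply inv_Clos in Hp as [(X & ->) | (p1 & p2 & -> & Hp1 & Hp2)].
  + destruct (junk_exists n P HG X Hn) as (y & Hy & Hj).
    exfalso. apply (junk_not_template P (Var NS :: repeat (Var NS) (length R)) y Hj).
    apply Hsub; auto.
  + destruct Hn as [Hn1 _].
    destruct (IH p1 Hn1 Hp1) as (al & sg & pr & Hl & ->).
    * intros g1 Hg1. specialize (Hsub _ (L_clos _ _ _ _ _ Hg1 Hp2)).
      apply Lang_Clos in Hsub as (x1 & x2 & E & H1 & _). injection E as <- <-. auto.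
    * exists al, sg, (p2 :: pr). simpl. auto.
Qed.

Fixpoint tsize {X} (t : tree X) : nat :=
  match t with
  | Var _ | Shift | Zero => 1
  | App a b | Clos a b => S (tsize a + tsize b)
  | Lam a | Slash a | Lift a | Succ a => S (tsize a)
  end.

Lemma bound (l : grammar) : exists B, forall X a, In (X, a) l -> tsize a <= B.
Proof. induction l as [|[Y b] l [B IH]].
- exists 0; intros; contradiction.
- exists (tsize b + B). intros X a [H|H].
  + injection H; intros; subst; lia.
  + specialize (IH _ _ H); lia. Qed.

Lemma tsize_succs i : tsize (succs i (Zero : tree nt)) = S i.
Proof. induction i; simpl; auto. Qed.

Lemma succ_inv P i : forall al d, valid P al (succs i Zero) d ->
  (exists j X, al = succs j (Var X)) \/ al = succs i Zero.
Proof. induction i; intros al d H; simpl in H; inversion H; subst.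
- left; exists 0, X; reflexivity.
- right; reflexivity.
- left; exists 0, X; reflexivity.
- clear H. destruct (IHi _ _ ltac:(eassumption)) as [(j & X & ->)| ->].
  + left; exists (S j), X; reflexivity.
  + right; reflexivity. Qed.

Lemma L_succs P j x y : Lang P x y -> Lang P (succs j x) (succs j y).
Proof. induction j; simpl; auto. intros; apply L_succ; auto. Qed.

Lemma all_nts_succs (p : nt -> Prop) j X : all_nts p (succs j (Var X)) -> p X.
Proof. induction j; simpl; auto. Qed.

Lemma succs_bad j (y : gterm) : wsorted SIndex y = false -> lo_step y <> None ->
  ~ (lterm (succs j y) /\ normalises_in 0 (succs j y)).
Proof. intros H1 H2 [H3 H4]. destruct j.
- apply H2. exact H4.
- unfold lterm in H3. simpl in H3. rewrite wsorted_succs, H1 in H3. discriminate. Qed.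

Lemma N_no_junk n P (HG : reduction_grammar n P) (Hs : simple n P) u :
  Lang P (Var NN) u -> (exists x y, u = Clos x y) -> lo_step u <> None -> False.
Proof. intros Hu [x [y ->]] Hstep.
  destruct HG as [_ [HL HGk]]. pose proof (lambda_complete P HL) as LC.
  destruct (HGk 0 (Nat.le_0_l n)) as [_ HG0].
  destruct (bound P) as [B HB].
  assert (H : Lang P (Var (NG 0)) (succs (S B) Zero)).
  { apply HG0. split.
    - unfold lterm. simpl. rewrite wsorted_succs. reflexivity.
    - unfold normalises_in. cbn [lo_iter]. apply (lo_step_succs (S B)). }
  destruct H as [d Hd]. inversion Hd; subst. clear Hd.
  rename a into al.
  match goal with Hi : In _ P, Hv : valid _ _ _ _ |- _ => rename Hi into Hin; rename Hv into Hval end.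
  destruct (succ_inv P (S B) al d0 Hval) as [(j & X & ->)| ->].
  2:{ specialize (HB _ _ Hin). rewrite tsize_succs in HB. lia. }
  assert (HX : X = NT \/ X = NS \/ X = NN).
  { destruct (classic (occurs (NG 0) (succs j (Var X)))) as [Ho|Ho].
    - destruct (proj1 Hs _ _ Hin Ho) as [HLp | (k & _ & [E|[E|E]])].
      + simpl in HLp. repeat (destruct HLp as [HLp|HLp]; [discriminate|]). contradiction.
      + destruct j; discriminate.
      + destruct j; discriminate.
      + destruct j; discriminate.
    - pose proof (all_nts_succs _ _ _ (proj2 Hs 0 _ Hin Ho)) as HX.
      destruct HX as [ -> | [ -> | [ -> | (i & Hi & _) ] ] ]; auto. lia. }
  assert (Hgen : forall z, Lang P (Var X) z -> lterm (succs j z) /\ normalises_in 0 (succs j z)).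
  { intros z Hz. apply HG0. apply Lang_var with (succs j (Var X)); auto. apply L_succs; auto. }
  destruct HX as [ -> | [ -> | -> ] ].
  - apply (succs_bad j (Clos Zero Shift)); [reflexivity|discriminate|].
    apply Hgen. apply LC. reflexivity.
  - assert (HS : Lang P (Var NS) Shift) by (apply LC; reflexivity).
    destruct (Hgen Shift HS) as [H _].
    destruct j; unfold lterm in H; simpl in H; [discriminate|]. rewrite wsorted_succs in H. discriminate.
  - apply (succs_bad j (Clos x y)); [reflexivity|auto|]. apply Hgen; auto.
Qed.

Lemma split_chain (g : tree nt) : exists h sr, g = rchain h sr /\ notClos h /\
  clos_head g = h /\ clos_width g = length sr.
Proof. induction g; try (exists (Var n), []; split; [reflexivity|split; [intros ? ? ?; discriminate|auto]]; fail);
  try (eexists; exists []; split; [reflexivity|split; [intros ? ? ?; discriminate|auto]]; fail).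
  destruct IHg1 as (h & sr & -> & Hh & E1 & E2).
  exists h, (g2 :: sr). simpl. rewrite E1, E2. auto. Qed.

Lemma width n P (HG : reduction_grammar n P) (Hs : simple n P) gam a s R :
  (forall k, clos_head gam <> Var (NG k)) ->
  (forall y, Lang P gam y -> lterm y /\ normalises_in n y) ->
  Lang P gam (rchain (Lam (Clos a (Lift s))) R) -> clos_width gam = length R.
Proof. intros Hverb Hsem Hg.
  pose proof (lambda_complete P (proj1 (proj2 HG))) as LC.
  destruct (split_chain gam) as (h & sr & -> & Hh & Eh & Ew). rewrite Ew. rewrite Eh in Hverb.
  apply decompose in Hg as (u & gr & E & Hu & HF).
  assert (HL0 : notClos (Lam (Clos a (Lift s)) : gterm)) by (intros ? ? ?; discriminate).
  destruct (classic (exists x y, u = Clos x y)) as [Hc|Hc].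
  2:{ assert (Hu' : notClos u) by (intros x y Exy; apply Hc; eauto).
      destruct (rchain_inj _ _ HL0 Hu' _ _ E) as [_ ->]. apply (Forall2_length HF). }
  exfalso.
  destruct (rchain_prefix _ _ HL0 _ _ E) as (r1 & -> & Eu).
  assert (Hr1 : r1 <> []) by (intros ->; simpl in Eu; destruct Hc as (x & y & Hc); congruence).
  destruct Hc as (x & y & ->).
  pose proof Hu as Hu0.
  apply inv_Clos in Hu as [(X & ->) | (p1 & p2 & -> & _)].
  2:{ eapply Hh; eauto. }
  assert (Hcomp : forall z, Lang P (Var X) z -> lterm (rchain z gr) /\ normalises_in n (rchain z gr)).
  { intros z Hz. apply Hsem. apply compose; auto. }
  destruct X as [ | | | k].
  - destruct gr as [|g0 gr'].
    + destruct (Hcomp Zero) as [_ H0]. apply LC; reflexivity.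
      destruct (Hcomp (Clos Zero Shift)) as [_ H1]. apply LC; reflexivity.
      simpl in H0, H1.
      assert (n = 0) by (apply (norm_det n 0 Zero); auto; reflexivity).
      assert (n = 1) by (apply (norm_det n 1 (Clos Zero Shift)); auto; reflexivity).
      lia.
    + destruct (Hcomp (Lam Zero)) as [_ H2]. apply LC; reflexivity.
      destruct (Hcomp (Lam (Lam Zero))) as [_ H3]. apply LC; reflexivity.
      pose proof (norm_det _ _ _ H2 (norm_2m _)).
      pose proof (norm_det _ _ _ H3 (norm_3m _)).
      simpl in *. lia.
  - destruct (Hcomp Shift) as [H _]. apply LC; reflexivity.
    apply lterm_rchain in H as [H _]. discriminate.
  - apply (N_no_junk n P HG Hs (Clos x y) Hu0); [eauto|].
    rewrite Eu. apply lamchain_nonnil; auto.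
  - apply (Hverb k). reflexivity.
Qed.

Lemma key P (a s : gterm) al sg R sr : length sr = length R ->
  (Lang P (rchain (Clos (Lam al) sg) sr) (rchain (Clos (Lam a) s) R) <->
   Lang P (rchain (Lam (Clos al (Lift sg))) sr) (rchain (Lam (Clos a (Lift s))) R)).
Proof. intros Hl. split; intros H.
  all: apply decompose in H as (u & gr & E & Hu & HF).
  all: pose proof (Forall2_length HF) as HFl.
  all: assert (HRl : length R = length gr) by (transitivity (length sr); [symmetry; exact Hl | exact HFl]).
  all: destruct (rchain_inj_len _ _ R gr HRl E) as [Eu ER]; subst u gr.
  - apply Lang_Clos in Hu as (g1 & g2 & E1 & H1 & H2). injection E1 as <- <-.
    apply Lang_Lam in H1 as (g3 & E3 & H3). injection E3 as <-.
    apply compose; auto. apply L_lam, L_clos; auto. apply L_lift; auto.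
  - apply Lang_Lam in Hu as (g1 & E1 & H1). injection E1 as <-.
    apply Lang_Clos in H1 as (g2 & g3 & E2 & H2 & H3). injection E2 as <- <-.
    apply Lang_Lift in H3 as (g4 & E4 & H4). injection E4 as <-.
    apply compose; auto. apply L_clos; auto. apply L_lam; auto.
Qed.

Lemma inv_var P X g : Lang P (Var X) g -> exists a, In (X, a) P /\ Lang P a g.
Proof. intros [d H]. inversion H; subst. eexists; split; eauto. eexists; eauto. Qed.

Lemma repeat_NS P (HL : forall p, In p Lambda_prods -> In p P) R :
  Forall (fun g => wsorted SSubst g = true) R -> Forall2 (Lang P) (repeat (Var NS) (length R)) R.
Proof. induction 1; simpl; constructor; auto. apply (lambda_complete P HL); auto. Qed.

Theorem mainTheorem7 (n : nat) (P : grammar)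
  (HG : reduction_grammar n P) (Hsimple : simple n P) (Hverbose : verbose P)
  (Pi : tree nt -> list (tree nt))
  (HPi : forall gamma, In (NG n, gamma) P ->
           is_intersection_partition n P (Pi gamma) gamma
             (template_target phi gamma))
  (a s : gterm) (ss : list gterm)
  (Ht : lterm (clos_chain (Clos (Lam a) s) ss)) :
  normalises_in (S n) (clos_chain (Clos (Lam a) s) ss) <->
  exists! p : tree nt,
    Delta n P Pi p /\
    exists (alpha sigma : tree nt) (sigmas : list (tree nt)),
      length sigmas = length ss /\
      p = clos_chain (Lam (Clos alpha (Lift sigma))) sigmas /\
      Lang P (clos_chain (Clos (Lam alpha) sigma) sigmas)
        (clos_chain (Clos (Lam a) s) ss).
Proof.
  pose proof HG as HG'. destruct HG' as [HGp [HL HGk]].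
  pose proof (lambda_complete P HL) as LC.
  remember (rev ss) as R eqn:ER.
  assert (HR : length ss = length R) by (rewrite ER, length_rev; reflexivity).
  assert (Et : clos_chain (Clos (Lam a) s) ss = rchain (Clos (Lam a) s) R)
    by (rewrite ER; apply clos_chain_rchain).
  set (L0 := Lam (Clos a (Lift s)) : gterm).
  assert (Estep : lo_step (rchain (Clos (Lam a) s) R) = Some (rchain L0 R))
    by (apply lo_ctx; eauto).
  rewrite Et in Ht |- *.
  assert (Ht' : lterm (rchain L0 R)).
  { apply lterm_rchain in Ht as [H1 H2]. apply lterm_rchain. split; auto. }
  assert (HaS : wsorted STerm a = true /\ wsorted SSubst s = true).
  { apply lterm_rchain in Ht as [H1 _]. unfold lterm in H1; simpl in H1.
    apply Bool.andb_true_iff in H1. exact H1. }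
  assert (HRs : Forall (fun g => wsorted SSubst g = true) R)
    by (apply lterm_rchain in Ht as [_ H2]; exact H2).
  rewrite (norm_step n _ _ Estep).
  split.
  - intros Hn.
    assert (HLG : Lang P (Var (NG n)) (rchain L0 R)) by (apply (proj2 (HGk n (le_n n))); auto).
    destruct (inv_var _ _ _ HLG) as (gam & Hin & Hgam).
    assert (Hw : clos_width gam = length R).
    { apply (width n P HG Hsimple gam a s R).
      - intros k Hk. apply (Hverbose _ _ Hin). eauto.
      - intros y Hy. apply (proj2 (HGk n (le_n n))). eapply Lang_var; eauto.
      - exact Hgam. }
    destruct (HPi gam Hin) as (Hnts & Hdisj & Hcov).
    assert (Etpl : template_target phi gam = rchain phi (repeat (Var NS) (length R))).
    { unfold template_target. rewrite clos_chain_rchain, rev_repeat, Hw. simpl (clos_width phi).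
      rewrite Nat.sub_0_r. reflexivity. }
    assert (Htmp : Lang P (template_target phi gam) (rchain L0 R)).
    { rewrite Etpl. apply compose.
      - apply L_lam, L_clos, L_lift; apply LC; tauto.
      - apply repeat_NS; auto. }
    destruct (proj2 (Hcov (rchain L0 R)) (conj Hgam Htmp)) as (p & Hp & HpL).
    destruct (shape n P HG a s R p (Hnts p Hp) HpL) as (al & sg & pr & Hl & Ep).
    { intros g Hg. assert (Hc : exists p, In p (Pi gam) /\ Lang P p g) by eauto.
      apply Hcov in Hc as [_ Hc]. rewrite Etpl in Hc. exact Hc. }
    exists p. split.
    + split. exists gam; auto.
      exists al, sg, (rev pr). split; [rewrite length_rev; transitivity (length R); [exact Hl | symmetry; exact HR]|]. split.
      * rewrite clos_chain_rchain, rev_involutive; auto.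
      * rewrite clos_chain_rchain, rev_involutive.
        apply (proj2 (key P a s al sg R pr Hl)). rewrite <- Ep. exact HpL.
    + intros p' [[gam' [Hin' Hp']] (al' & sg' & sgs' & Hl' & Ep' & HL')].
      rewrite clos_chain_rchain in Ep', HL'.
      assert (HLp' : Lang P p' (rchain L0 R)).
      { rewrite Ep'. apply (proj1 (key P a s al' sg' R (rev sgs') ltac:(rewrite length_rev; transitivity (length ss); [exact Hl' | exact HR]))).
        exact HL'. }
      destruct (HPi gam' Hin') as (_ & _ & Hcov').
      assert (Hgam' : Lang P gam' (rchain L0 R)) by (apply (Hcov' _); eauto).
      destruct Hgam as [d1 Hd1], Hgam' as [d2 Hd2].
      assert (Eq : DExp gam d1 = DExp gam' d2)
        by (apply (proj1 (HGk n (le_n n)) (rchain L0 R)); constructor; auto).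
      injection Eq as <- <-.
      destruct (classic (p = p')) as [|Hne]; auto. exfalso.
      apply (Hdisj p p' Hp Hp' Hne (rchain L0 R)). split; auto.
  - intros (p & [[gam [Hin Hp]] (al & sg & sgs & Hl & Ep & HLx)] & _).
    rewrite clos_chain_rchain in Ep, HLx.
    assert (HLp : Lang P p (rchain L0 R)).
    { rewrite Ep. apply (proj1 (key P a s al sg R (rev sgs) ltac:(rewrite length_rev; transitivity (length ss); [exact Hl | exact HR]))).
      exact HLx. }
    destruct (HPi gam Hin) as (_ & _ & Hcov).
    assert (Hg : Lang P gam (rchain L0 R)) by (apply (Hcov _); eauto).
    apply (proj2 (HGk n (le_n n))). eapply Lang_var; eauto.
Qed.
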